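(* Let $r\ge 2$, $k\ge 3$, $m\ge 2$ be integers. (1) If there is a coloring of $\mathbb{Z}_m$ with $r$ colors containing no nontrivial monochromatic $k$-AP, then there is a constant $C$ (depending on $m,k$) such that for every $n$ there is a coloring of $[n]$ with $r$ colors whose number $N$ of monochromatic $k$-APs satisfies $\left|N-\frac{1}{2m(k-1)}n^2\right|\le Cn$. (2) If there is a coloring of $\mathbb{Z}_m\setminus\{0\}$ with $r$ colors such that, for each of the $r$ possible choices of color for $0$, the resulting coloring of $\mathbb{Z}_m$ contains no nontrivial monochromatic $k$-AP, then there is a constant $C$ (depending on $m,k$) such that for every $n$ there is a coloring of $[n]$ with $r$ colors whose number $N$ of monochromatic $k$-APs satisfies $\left|N-\frac{1}{2(m+1)(k-1)}n^2\right|\le Cn$.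
   Context: A $k$-AP in $[n]=\{1,\ldots,n\}$ is a sequence $a,a+d,\ldots,a+(k-1)d$ of elements of $[n]$ with integer $d\ge 1$. A $k$-AP in $\mathbb{Z}_m$ is a sequence $a,a+d,\ldots,a+(k-1)d$ with $a,d\in\mathbb{Z}_m$ (arithmetic mod $m$); it is trivial if $d\equiv 0\pmod m$ (i.e., all terms are equal) and nontrivial otherwise. A progression is monochromatic if all its terms receive the same color. *)

(* Defs.v *)
From HB Require Import structures.
From mathcomp Require Import all_boot all_order all_algebra.
Set Implicit Arguments. Unset Strict Implicit. Unset Printing Implicit Defensive.
Import Order.TTheory GRing.Theory Num.Theory.

Definition mono_AP_count (r k n : nat) (c : nat -> 'I_r) : nat :=
  \sum_(a < n.+1) \sum_(d < n.+1)
     [&& 0 < (a : nat), 0 < (d : nat), a + (k - 1) * d <= n &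
         [forall i : 'I_k, c (a + i * d) == c a]].

(* A coloring c of Z_m has a nontrivial monochromatic k-AP
   (to be used with 1 < m so that 'Z_m is Z/mZ). *)
Definition has_nontriv_mono_AP_Zm (r k m : nat) (c : 'Z_m -> 'I_r) : Prop :=
  exists a d : 'Z_m, (d != 0)%R /\ forall i : 'I_k, c (a + d *+ i)%R = c a.

(* Main.v *)
Require Import Defs.
From HB Require Import structures.
From mathcomp Require Import all_boot all_order all_algebra.
From mathcomp Require Import zify ring lra.
Import Order.TTheory GRing.Theory Num.Theory.
Set Implicit Arguments. Unset Strict Implicit. Unset Printing Implicit Defensive.

Definition monoP (r k : nat) (col : nat -> 'I_r) (a d : nat) : bool :=
  [forall i : 'I_k, col (a + i * d) == col a].
Definition Sx (r k : nat) (col : nat -> 'I_r) (x d : nat) : bool :=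
  [&& 0 < d, (k-1)*d < x & monoP k col (x - (k-1)*d) d].
Definition Dl (r k : nat) (col : nat -> 'I_r) (x : nat) : nat :=
  \sum_(0 <= d < x) Sx k col x d.

Lemma sum_pick (N b : nat) (p : nat -> bool) :
  \sum_(0 <= a < N) ((a == b) && p a) = ((b < N) && p b).
Proof.
elim: N => [|N IH]; first by rewrite big_geq.
rewrite big_nat_recr //= IH.
case: (ltngtP b N) => [h|h|->].
- by rewrite (ltn_trans h (ltnSn _)) addn0.
- by rewrite ltnS leqNgt h.
- by rewrite ltnSn.
Qed.

Lemma nb0 (b : bool) : ~~ b -> (b : nat) = 0.
Proof. by move/negbTE ->. Qed.

Lemma mapc (r k n : nat) (col : nat -> 'I_r) :
  mono_AP_count k n col = \sum_(0 <= a < n.+1) \sum_(0 <= d < n.+1)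
     [&& 0 < a, 0 < d, a + (k - 1) * d <= n & monoP k col a d].
Proof.
rewrite /mono_AP_count big_mkord; apply: eq_bigr => a _.
by rewrite big_mkord.
Qed.

Lemma count_step (r k n : nat) (col : nat -> 'I_r) : (2 <= k)%N ->
  mono_AP_count k n.+1 col = mono_AP_count k n col + Dl k col n.+1.
Proof.
move=> hk; rewrite !mapc.
set L := k - 1.
have hL : 0 < L by rewrite /L; lia.
have E : forall a d, [&& 0 < a, 0 < d, a + L * d <= n.+1 & monoP k col a d]
   = [&& 0 < a, 0 < d, a + L * d <= n & monoP k col a d] +
     ((a + L * d == n.+1) && [&& 0 < a, 0 < d & monoP k col a d]) :> nat.
  move=> a d; rewrite [_ <= n.+1]leq_eqVlt ltnS.
  case: (a + L * d =P n.+1) => [h|h] /=.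
    rewrite h ltnn. by case: (0 < a); case: (0 < d); case: monoP.
  by rewrite addn0.
under eq_bigr do under eq_bigr do rewrite E.
under eq_bigr do rewrite big_split /=.
rewrite big_split /=; congr (_ + _).
  rewrite big_nat_recr //= [X in _ + X]big1 ?addn0; last first.
    move=> d _; apply: nb0; apply/negP; case/and3P => _ h _.
    move: h; lia.
  apply: eq_bigr => a _; rewrite big_nat_recr //= [X in _ + X](_ : _ = 0) ?addn0 //.
  apply: nb0; apply/negP; case/and3P => _ h _.
  move: h hL; nia.
rewrite exchange_big /Dl big_nat_recr //=.
rewrite [X in _ + X](_ : _ = 0); last first.
  rewrite big1 // => a _; apply: nb0; apply/negP.
  case/and3P=> /eqP h h2 _; move: h h2 hL; nia.
rewrite addn0; apply: eq_bigr => d _.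
rewrite /Sx -/L.
case: (ltnP (L * d) n.+1) => h.
  transitivity (\sum_(0 <= a < n.+2) ((a == n.+1 - L * d) && [&& 0 < a, 0 < d & monoP k col a d]) : nat).
    apply: eq_bigr => a _; congr (nat_of_bool (_ && _)); apply/eqP/eqP; lia.
  rewrite sum_pick.
  have -> : n.+1 - L * d < n.+2 by lia.
  have -> : 0 < n.+1 - L * d by lia.
  by [].
rewrite big1 /=; first by rewrite andbF.
move=> a _; apply: nb0; apply/negP; case/andP => /eqP h1 /and3P [h2 _ _].
move: h1 h2 h; lia.
Qed.

Lemma count_sum (r k n : nat) (col : nat -> 'I_r) : (2 <= k)%N ->
  mono_AP_count k n col = \sum_(0 <= x < n) Dl k col x.+1.
Proof.
move=> hk; elim: n => [|n IH].
  by rewrite mapc big_nat1 big_nat1 [RHS]big_geq.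
by rewrite count_step // IH big_nat_recr.
Qed.

Local Open Scope ring_scope.
Lemma Zp0 (m t : nat) : (1 < m)%N -> ((t%:R : 'Z_m) == 0) = (m %| t)%N.
Proof. by move=> hm; rewrite -(inj_eq val_inj) /= val_Zp_nat. Qed.

Lemma ZpAP (m a d i : nat) : (a%:R + d%:R *+ i : 'Z_m) = (a + i * d)%N%:R.
Proof. by rewrite natrD natrM mulr_natl. Qed.
Local Close Scope ring_scope.

Definition col1 (r m : nat) (c : 'Z_m -> 'I_r) (z : nat) : 'I_r := c (z%:R)%R.

Lemma mono1 (r k m : nat) (c : 'Z_m -> 'I_r) : 1 < m ->
  ~ has_nontriv_mono_AP_Zm k c -> forall a d, monoP k (col1 c) a d = (m %| d).
Proof.
move=> hm hc a d; apply/idP/idP.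
  move=> hmono; apply/negPn/negP => nd; apply: hc; exists a%:R%R, d%:R%R; split.
    by rewrite Zp0.
  by move=> i; move/forallP: hmono => /(_ i)/eqP; rewrite /col1 ZpAP.
move=> dd; rewrite /monoP; apply/forallP => i; rewrite /col1 natrD natrM.
have -> : (d%:R : 'Z_m)%R = 0%R by apply/eqP; rewrite Zp0.
by rewrite GRing.mulr0 GRing.addr0.
Qed.

Definition Dc (k m x : nat) : nat := \sum_(0 <= d < x) [&& 0 < d, (k-1) * d < x & m %| d].

Lemma cntm (m B : nat) : 0 < m -> \sum_(0 <= d < B.+1) [&& 0 < d & m %| d] = B %/ m.
Proof.
move=> hm; elim: B => [|B IH]; first by rewrite big_nat1 div0n.
by rewrite big_nat_recr //= IH divnS // addnC.
Qed.

Lemma DcE (k m x : nat) : 2 <= k -> 0 < m -> Dc k m x = x.-1 %/ ((k-1) * m).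
Proof.
move=> hk hm; case: x => [|y]; first by rewrite /Dc big_geq // div0n.
rewrite /Dc /= divnMA -cntm //.
have hL : 0 < k - 1 by lia.
rewrite (big_cat_nat _ (n := (y %/ (k-1)).+1)) //=; last by rewrite ltnS leq_div.
rewrite [X in _ + X]big_nat_cond [X in _ + X]big1 ?addn0; last first.
  move=> d /andP[/andP[h1 h2] _]; apply: nb0; apply/negP => /and3P[_ h3 _].
  move: h1; rewrite ltnNge leq_divRL // mulnC -ltnS h3 //.
apply: eq_big_nat => d /andP[_ hd].
move: hd; rewrite ltnS leq_divRL // mulnC => hd.
by rewrite ltnS hd.
Qed.

Lemma Dl1 (r k m : nat) (c : 'Z_m -> 'I_r) : 1 < m ->
  ~ has_nontriv_mono_AP_Zm k c -> forall x, Dl k (col1 c) x = Dc k m x.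
Proof.
move=> hm hc x; apply: eq_bigr => d _; by rewrite /Sx mono1.
Qed.

Fixpoint colf (r m : nat) (c : 'Z_m -> 'I_r) (x0 : 'I_r) (f x : nat) : 'I_r :=
  match f with
  | 0 => x0
  | f'.+1 => if m %| x then colf c x0 f' (x %/ m) else c (x%:R)%R
  end.
Definition col2 (r m : nat) (c : 'Z_m -> 'I_r) (x0 : 'I_r) (x : nat) : 'I_r :=
  colf c x0 x x.

Lemma colfE (r m : nat) (c : 'Z_m -> 'I_r) x0 : 1 < m ->
  forall f g x, 0 < x <= f -> x <= g -> colf c x0 f x = colf c x0 g x.
Proof.
move=> hm; elim=> [|f IH] [|g] x /andP[h1 h2] h3 //=; first by move: h1 h2; lia.
  by move: h1 h3; lia.
case: ifP => // dx; apply: IH.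
  have hm0 : 0 < m by lia.
  rewrite divn_gt0 // (dvdn_leq h1 dx) /=.
  rewrite -ltnS; apply: leq_trans h2; exact: ltn_Pdiv.
rewrite -ltnS; apply: leq_trans h3; exact: ltn_Pdiv.
Qed.

Lemma col2E (r m : nat) (c : 'Z_m -> 'I_r) x0 : 1 < m ->
  forall x, 0 < x -> col2 c x0 x = if m %| x then col2 c x0 (x %/ m) else c (x%:R)%R.
Proof.
move=> hm [|y] // _; rewrite /col2 /=; case: ifP => // dx.
apply: colfE => //.
have hm0 : 0 < m by lia.
rewrite divn_gt0 // (dvdn_leq _ dx) //= -ltnS; exact: ltn_Pdiv.
Qed.

Lemma col2M (r m : nat) (c : 'Z_m -> 'I_r) x0 : 1 < m ->
  forall t, 0 < t -> col2 c x0 (m * t) = col2 c x0 t.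
Proof.
move=> hm t ht; have hm0 : 0 < m by lia.
rewrite col2E // ?muln_gt0 ?hm0 ?ht // dvdn_mulr // mulKn //.
Qed.


Lemma mono2_i (r k m : nat) (c : 'Z_m -> 'I_r) x0 : 1 < m ->
  (forall y : 'I_r, ~ has_nontriv_mono_AP_Zm k (fun z : 'Z_m => if z == 0%R then y else c z)) ->
  forall a d, 0 < a -> ~~ (m %| d) -> monoP k (col2 c x0) a d = false.
Proof.
move=> hm hc a d ha nd; apply/negP => hmono.
have key : forall t, 0 < t -> col2 c x0 t = col2 c x0 a ->
   (if (t%:R : 'Z_m)%R == 0%R then col2 c x0 a else c (t%:R)%R) = col2 c x0 a.
  move=> t ht; rewrite Zp0 //; case: ifP => // nt.
  by rewrite col2E // nt.
apply: (hc (col2 c x0 a)); exists a%:R%R, d%:R%R; split; first by rewrite Zp0.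
move=> i; rewrite ZpAP key //; last first.
  by move/forallP: hmono => /(_ i)/eqP.
  by rewrite addn_gt0 ha.
by rewrite key.
Qed.

Lemma mono2_ii (r k m : nat) (c : 'Z_m -> 'I_r) x0 : 1 < m ->
  forall a d, 0 < a -> ~~ (m %| a) -> m %| d -> monoP k (col2 c x0) a d.
Proof.
move=> hm a d ha na dd; apply/forallP => i; apply/eqP.
have hid : m %| i * d by apply: dvdn_mull.
rewrite (@col2E _ _ c x0 hm (a + i * d)) ?addn_gt0 ?ha // (@col2E _ _ c x0 hm a ha).
rewrite (dvdn_addl _ hid) (negbTE na) natrD.
have -> : ((i * d)%:R : 'Z_m)%R = 0%R by apply/eqP; rewrite Zp0.
by rewrite GRing.addr0.
Qed.

Lemma mono2_iii (r k m : nat) (c : 'Z_m -> 'I_r) x0 : 1 < m ->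
  forall a d, 0 < a -> monoP k (col2 c x0) (m * a) (m * d) = monoP k (col2 c x0) a d.
Proof.
move=> hm a d ha; apply: eq_forallb => i.
have -> : m * a + i * (m * d) = m * (a + i * d) by rewrite mulnDr mulnCA.
by rewrite !col2M // addn_gt0 ha.
Qed.

Lemma Dl2_nd (r k m : nat) (c : 'Z_m -> 'I_r) x0 : 1 < m -> 2 <= k ->
  (forall y : 'I_r, ~ has_nontriv_mono_AP_Zm k (fun z : 'Z_m => if z == 0%R then y else c z)) ->
  forall x, 0 < x -> ~~ (m %| x) -> Dl k (col2 c x0) x = Dc k m x.
Proof.
move=> hm hk hc x hx nx; apply: eq_bigr => d _; rewrite /Sx.
case hd: (0 < d) => //=; case hl: ((k-1) * d < x) => //=.
have ha : 0 < x - (k - 1) * d by lia.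
case dd: (m %| d).
  have na : ~~ (m %| x - (k - 1) * d).
    apply/negP => da; move/negP: nx; apply.
    have -> : x = (x - (k - 1) * d) + (k - 1) * d by lia.
    by rewrite dvdn_add // dvdn_mull.
  by rewrite (@mono2_ii r k m c x0 hm _ _ ha na).
by rewrite mono2_i // dd.
Qed.

Lemma reidx (m y : nat) (g : nat -> bool) : 0 < m ->
  \sum_(0 <= d < m * y) ((m %| d) && g d) = \sum_(0 <= d < y) g (m * d).
Proof.
move=> hm; elim: y => [|y IH]; first by rewrite muln0 !big_geq.
rewrite mulnS addnC (big_cat_nat _ (n := m * y)) //=; last by rewrite leq_addr.
rewrite IH big_nat_recr //=; congr (_ + _).
rewrite big_ltn; last by rewrite -addn1 leq_add2l.
rewrite dvdn_mulr //= [X in _ + X]big_nat_cond [X in _ + X]big1 ?addn0 //.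
move=> d /andP[/andP[h1 h2] _]; apply: nb0; apply/negP => /andP[md _].
move: md => /dvdnP [q hq]; subst d.
move: h1 h2; rewrite [q * m]mulnC [m * y + m]addnC -mulnS !ltn_pmul2l //; lia.
Qed.

Lemma Dl2_d (r k m : nat) (c : 'Z_m -> 'I_r) x0 : 1 < m -> 2 <= k ->
  (forall y : 'I_r, ~ has_nontriv_mono_AP_Zm k (fun z : 'Z_m => if z == 0%R then y else c z)) ->
  forall y, 0 < y -> Dl k (col2 c x0) (m * y) = Dl k (col2 c x0) y.
Proof.
move=> hm hk hc y hy; rewrite /Dl.
have hm0 : 0 < m by lia.
transitivity (\sum_(0 <= d < m * y) ((m %| d) && Sx k (col2 c x0) (m * y) d) : nat).
  apply: eq_bigr => d _; case dd: (m %| d) => //=.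
  rewrite /Sx; case hd: (0 < d) => //=; case hl: ((k-1) * d < m * y) => //=.
  rewrite (@mono2_i r k m c x0 hm hc) //; [lia | by rewrite dd].
rewrite reidx //; apply: eq_bigr => d _.
rewrite /Sx muln_gt0 hm0 /=; case hd: (0 < d) => //=.
rewrite mulnCA ltn_pmul2l //; case hl: ((k-1) * d < y) => //=.
rewrite -mulnBr.
by rewrite mono2_iii //; lia.
Qed.

Lemma ident (r k m : nat) (c : 'Z_m -> 'I_r) x0 : 1 < m -> 2 <= k ->
  (forall y : 'I_r, ~ has_nontriv_mono_AP_Zm k (fun z : 'Z_m => if z == 0%R then y else c z)) ->
  forall n,
  \sum_(0 <= x < n) Dl k (col2 c x0) x.+1 + \sum_(0 <= y < n %/ m) Dc k m (m * y.+1)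
  = \sum_(0 <= x < n) Dc k m x.+1 + \sum_(0 <= y < n %/ m) Dl k (col2 c x0) y.+1.
Proof.
move=> hm hk hc; have hm0 : 0 < m by lia.
elim=> [|n IH]; first by rewrite div0n !big_geq.
rewrite (divnS n hm0); case: (boolP (m %| n.+1)) => dn.
  rewrite add1n !big_nat_recr //=.
  have hq : n.+1 = m * (n %/ m).+1.
    by rewrite -(divnK dn) (divnS n hm0) dn add1n mulnC.
  have e1 : Dl k (col2 c x0) n.+1 = Dl k (col2 c x0) (n %/ m).+1.
    by rewrite {1}hq Dl2_d.
  have e2 : Dc k m (m * (n %/ m).+1) = Dc k m n.+1 by rewrite -hq.
  rewrite e1 e2; lia.
rewrite add0n !big_nat_recr //= Dl2_nd //; lia.
Qed.

Definition Fs (k m n : nat) := \sum_(0 <= x < n) Dc k m x.+1.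
Definition Gs (k m q : nat) := \sum_(0 <= y < q) Dc k m (m * y.+1).

Local Open Scope ring_scope.

Lemma divB (X M : nat) : (0 < M)%N ->
  ((X %/ M)%:R <= X%:R / M%:R :> rat) /\ (X%:R / M%:R < (X %/ M)%:R + 1 :> rat).
Proof.
move=> hM; have hM' : 0 < M%:R :> rat by rewrite ltr0n.
split; first by rewrite ler_pdivlMr // -natrM ler_nat leq_divM.
by rewrite ltr_pdivrMr // natr1 -natrM ltr_nat ltn_ceil.
Qed.

Lemma FB (k m n : nat) : (2 <= k)%N -> (0 < m)%N ->
  `|(Fs k m n)%:R - (n ^ 2)%:R / (2 * ((k - 1) * m))%N%:R| <= 2 * n%:R :> rat.
Proof.
move=> hk hm; set M := ((k - 1) * m)%N.
have hM : (0 < M)%N by rewrite /M muln_gt0 hm andbT; lia.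
have hMr : (0:rat) < M%:R by rewrite ltr0n.
have hM0 : M%:R != 0 :> rat by rewrite gt_eqF.
elim: n => [|n IH]; first by rewrite /Fs big_geq //= !mul0r subrr normr0 mulr0.
have eF : Fs k m n.+1 = (Fs k m n + n %/ M)%N by rewrite /Fs big_nat_recr //= DcE.
rewrite eF natrD.
have [u1 u2] := divB n hM.
have eT : ((n.+1) ^ 2)%:R / (2 * M)%N%:R = (n ^ 2)%:R / (2 * M)%N%:R + n%:R / M%:R + 1 / (2 * M)%N%:R :> rat.
  by rewrite !natrX natrM -addn1 natrD; field.
have w1 : 0 <= 1 / (2 * M)%N%:R :> rat by rewrite divr_ge0.
have h2M : (0 < 2 * M)%N by rewrite muln_gt0 hM.
have w2 : 1 / (2 * M)%N%:R <= 1 :> rat.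
  have hX : 1 <= (2 * M)%N%:R :> rat by rewrite ler1n.
  by rewrite ler_pdivrMr ?ltr0n // GRing.mul1r.
rewrite eT; move: IH; rewrite !ler_norml -natr1 => /andP[h1 h2].
apply/andP; split; lra.
Qed.

Lemma GB (k m q : nat) : (2 <= k)%N -> (2 <= m)%N ->
  `|(Gs k m q)%:R - (m * q ^ 2)%N%:R / (2 * ((k - 1) * m))%N%:R| <= q%:R :> rat.
Proof.
move=> hk hm2; have hm : (0 < m)%N by lia.
set M := ((k - 1) * m)%N.
have hM : (0 < M)%N by rewrite /M muln_gt0 hm andbT; lia.
have hMm : (m <= M)%N by rewrite /M leq_pmull //; lia.
have hMr : (0:rat) < M%:R by rewrite ltr0n.
have hM0 : M%:R != 0 :> rat by rewrite gt_eqF.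
have h2M : (0 < 2 * M)%N by rewrite muln_gt0 hM.
elim: q => [|q IH]; first by rewrite /Gs big_geq //= muln0 !mul0r subrr normr0.
set X := (m * q.+1).-1.
have eG : Gs k m q.+1 = (Gs k m q + X %/ M)%N by rewrite /Gs big_nat_recr //= DcE.
rewrite eG natrD.
have [u1 u2] := divB X hM.
have eX : X%:R = m%:R * (q%:R + 1) - 1 :> rat.
  have e : (X + 1 = m * q.+1)%N by rewrite /X; lia.
  by rewrite natr1 -natrM -e natrD addrK.
set w := (m%:R - 2) / (2 * M)%N%:R : rat.
have eT : (m * q.+1 ^ 2)%N%:R / (2 * M)%N%:R
   = (m * q ^ 2)%N%:R / (2 * M)%N%:R + X%:R / M%:R - w :> rat.
  rewrite /w eX !natrM -natr1; field.
  rewrite !pnatr_eq0; apply/andP; split; lia.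
have w1 : 0 <= w.
  rewrite /w divr_ge0 // subr_ge0.
  by rewrite ler_nat.
have w2 : w <= 1 / 2.
  rewrite /w ler_pdivrMr ?ltr0n // natrM.
  have : m%:R <= M%:R :> rat by rewrite ler_nat.
  lra.
rewrite eT; move: IH; rewrite !ler_norml -natr1 => /andP[h1 h2].
apply/andP; split; lra.
Qed.

Lemma main2 (r k m : nat) (c : 'Z_m -> 'I_r) x0 : (1 < m)%N -> (2 <= k)%N ->
  (forall y : 'I_r, ~ has_nontriv_mono_AP_Zm k (fun z : 'Z_m => if z == 0%R then y else c z)) ->
  forall n, `|(\sum_(0 <= x < n) Dl k (col2 c x0) x.+1)%:R
              - (n ^ 2)%:R / (2 * (m + 1) * (k - 1))%N%:R| <= 8 * n%:R :> rat.
Proof.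
move=> hm hk hc; have hm0 : (0 < m)%N by lia.
elim/ltn_ind => n IHn.
case: n IHn => [|n'] IHn; first by rewrite big_geq //= !mul0r subrr normr0 mulr0.
set n := n'.+1.
set q := (n %/ m)%N.
have hqn : (q < n)%N by apply: ltn_Pdiv.
have IHq := IHn q hqn.
have id := @ident r k m c x0 hm hk hc n.
move/(congr1 (fun z => z%:R : rat)): id; rewrite !natrD -/q => id.
have hF := @FB k m n hk hm0.
have hG := @GB k m q hk hm.
have h1 : (q * m <= n)%N by apply: leq_divM.
have h2 : (n < q.+1 * m)%N by apply: ltn_ceil.
have h3 : (2 * q <= n)%N by nia.
have hZ : ((m * q) ^ 2 <= n ^ 2)%N by rewrite leq_exp2r // mulnC.
set Z := (n ^ 2 - (m * q) ^ 2)%N.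
set D := (2 * (k - 1) * m * (m + 1))%N.
have hk1 : (0 < k - 1)%N by lia.
have hD : (0 < D)%N by rewrite /D !muln_gt0 hk1 hm0 addn1.
have hZD : (Z <= n * D)%N.
  have hZ2 : (Z <= 2 * m * n)%N by rewrite /Z; nia.
  apply: (leq_trans hZ2); rewrite /D mulnC leq_mul2l; apply/orP; right; nia.
have eR : (n ^ 2)%:R / (2 * ((k - 1) * m))%N%:R - (m * q ^ 2)%N%:R / (2 * ((k - 1) * m))%N%:R
   - (n ^ 2)%:R / (2 * (m + 1) * (k - 1))%N%:R + (q ^ 2)%:R / (2 * (m + 1) * (k - 1))%N%:R
   = Z%:R / D%:R :> rat.
  rewrite /Z /D natrB // !natrM !natrD; field.
  by rewrite natr1 !pnatr_eq0 -!lt0n hm0 hk1.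
have R0 : 0 <= Z%:R / D%:R :> rat by rewrite divr_ge0.
have R1 : Z%:R / D%:R <= n%:R :> rat.
  by rewrite ler_pdivrMr ?ltr0n // -natrM ler_nat.
have hq2 : 2 * q%:R <= n%:R :> rat by rewrite -(ler_nat rat) natrM in h3.
move: hF hG IHq; rewrite !ler_norml => /andP[f1 f2] /andP[g1 g2] /andP[e1 e2].
apply/andP; split; lra.
Qed.

Unset Implicit Arguments.
Local Open Scope ring_scope.

Theorem mainTheorem2 (r k m : nat) (hr : (2 <= r)%N) (hk : (3 <= k)%N) (hm : (2 <= m)%N) :
  ((exists c : 'Z_m -> 'I_r, ~ has_nontriv_mono_AP_Zm k c) ->
   exists C : rat, forall n : nat, exists col : nat -> 'I_r,
     `| (mono_AP_count k n col)%:R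
        - (n ^ 2)%:R / (2 * m * (k - 1))%N%:R | <= C * n%:R)
  /\
  ((exists c : 'Z_m -> 'I_r,
      forall x : 'I_r,
        ~ has_nontriv_mono_AP_Zm k (fun z : 'Z_m => if z == 0 then x else c z)) ->
   exists C : rat, forall n : nat, exists col : nat -> 'I_r,
     `| (mono_AP_count k n col)%:R
        - (n ^ 2)%:R / (2 * (m + 1) * (k - 1))%N%:R | <= C * n%:R).
Proof.
have hk2 : (2 <= k)%N by lia.
have hm0 : (0 < m)%N by lia.
split.
  move=> [c hc]; exists 2; move=> n; exists (col1 c).
  rewrite count_sum // (eq_bigr (fun x => Dc k m x.+1)); last by move=> x _; rewrite (@Dl1 r k m c hm hc).
  rewrite (_ : (2 * m * (k - 1))%N = (2 * ((k - 1) * m))%N); last by rewrite [((k - 1) * m)%N]mulnC mulnA.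
  exact: FB.
move=> [c hc]; exists 8; move=> n; exists (col2 c (c 0%R)).
rewrite count_sum //; exact: main2.
Qed.
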